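(* Let $S$ be a finite set, $f:S\to\mathbb{R}$ a fitness function to be maximized, $S_{\mathrm{opt}}$ the set of maximizers of $f$ and $S_{\mathrm{non}}=S\setminus S_{\mathrm{opt}}$ (assumed nonempty). Let $s1,\dots,s\kappa$ be $\kappa$ mutation operators on $S$, and let $\mathbf{q}$ be any strategy probability distribution over them. Then the homogeneous mixed strategy (1+1) EA with strategy distribution $\mathbf{q}$ satisfies $$R(\mathbf{T}_{\mathbf{q}})\ \ge\ \min\{R(\mathbf{T}_{sk});\ k=1,\dots,\kappa\}\quad\text{and}\quad T(\mathbf{T}_{\mathbf{q}})\ \le\ \max\{T(\mathbf{T}_{sk});\ k=1,\dots,\kappa\},$$ i.e. its asymptotic convergence rate is not smaller, and its asymptotic hitting time not larger, than that of the worst pure strategy (1+1) EA using only one of these mutation operators.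
   Context: A mutation operator $s$ on the finite set $S$ is a stochastic matrix $\mathbf{P}_{m,s}=[P_{m,s}(x,y)]_{x,y\in S}$ (probability that mutating $x$ yields $y$). Strict elitist selection between parent $x$ and offspring $y$ keeps $y$ if $f(y)>f(x)$ and keeps $x$ otherwise. The pure strategy (1+1) EA EA($s$) repeatedly mutates the current individual by $s$ and applies strict elitist selection; it is a homogeneous Markov chain on $S$ with transition probabilities $P_s(x,y)=P_{m,s}(x,y)$ if $f(y)>f(x)$, $P_s(x,y)=0$ if $y\neq x$ and $f(y)\le f(x)$, and $P_s(x,x)=1-\sum_{y:\,f(y)>f(x)}P_{m,s}(x,y)$. A (state-dependent) strategy probability distribution is a map $x\mapsto \mathbf{q}(x)=(q_{s1}(x),\dots,q_{s\kappa}(x))$ with $q_{sk}(x)\in[0,1]$ and $\sum_k q_{sk}(x)=1$. The homogeneous mixed strategy (1+1) EA with distribution $\mathbf{q}$ at each generation, with current individual $x$, chooses operator $sk$ with probability $q_{sk}(x)$, mutates $x$ by it, and applies strict elitist selection; its transition matrix is $P_{\mathbf{q}}(x,y)=\sum_{k}q_{sk}(x)P_{sk}(x,y)$. For such an EA with transition matrix $\mathbf{P}$, let $\mathbf{T}$ denote the submatrix $[P(x,y)]_{x,y\in S_{\mathrm{non}}}$ and $\rho(\mathbf{T})$ its spectral radius. The asymptotic convergence rate is $R(\mathbf{T})=-\ln\rho(\mathbf{T})$ (with $-\ln 0=+\infty$). The asymptotic hitting time is $T(\mathbf{T})=\rho((\mathbf{I}-\mathbf{T})^{-1})$ if $\rho(\mathbf{T})<1$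 and $T(\mathbf{T})=+\infty$ if $\rho(\mathbf{T})=1$. Subscripts $\mathbf{q}$ and $sk$ indicate the matrices of the mixed strategy EA and of the pure strategy EA($sk$), respectively. *)

(* Defs.v *)
From HB Require Import structures.
From mathcomp Require Import all_boot all_order all_algebra.
From mathcomp Require Import complex.
From mathcomp Require Import all_classical all_reals all_analysis.
Set Implicit Arguments. Unset Strict Implicit. Unset Printing Implicit Defensive.
Import Order.TTheory GRing.Theory Num.Theory.
Local Open Scope ring_scope.
Local Open Scope classical_set_scope.

Section EA.
Variable R : realType.

Definition spec_rad (n : nat) (A : 'M[R]_n) : R :=
  sup [set Normc.normc z | z in
         [set z : R[i] | eigenvalue (map_mx (real_complex R) A) z]].

Variable S : finType.

(* a mutation operator: a stochastic matrix indexed by S *)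
Definition stochastic (P : S -> S -> R) : Prop :=
  (forall x y, 0 <= P x y) /\ (forall x, \sum_(y : S) P x y = 1).

Variable f : S -> R.

Definition Snon : {set S} := [set x | [exists y, f x < f y]].

(* transition matrix of the pure strategy EA(s) with strict elitist selection *)
Definition pure_trans (Pm : S -> S -> R) (x y : S) : R :=
  if f x < f y then Pm x y
  else if y == x then 1 - \sum_(z | f x < f z) Pm x z
  else 0.

Definition strategy_distr (kappa : nat) (q : S -> 'I_kappa -> R) : Prop :=
  (forall x k, 0 <= q x k <= 1) /\ (forall x, \sum_(k < kappa) q x k = 1).

Definition mixed_trans (kappa : nat) (q : S -> 'I_kappa -> R)
    (Pm : 'I_kappa -> S -> S -> R) (x y : S) : R :=
  \sum_(k < kappa) q x k * pure_trans (Pm k) x y.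

Definition Tsub (P : S -> S -> R) : 'M[R]_#|Snon| :=
  \matrix_(i, j) P (enum_val i) (enum_val j).

Definition conv_rate (n : nat) (T : 'M[R]_n) : \bar R :=
  if spec_rad T == 0 then +oo%E else (- ln (spec_rad T))%:E.

(* asymptotic hitting time T(T) = rho((I-T)^-1) if rho(T) < 1, +oo otherwise
   (for these substochastic T one always has rho(T) <= 1) *)
Definition hit_time (n : nat) (T : 'M[R]_n) : \bar R :=
  if spec_rad T < 1 then (spec_rad (invmx (1%:M - T)))%:E else +oo%E.

End EA.

(* Main.v *)
From HB Require Import structures.
From mathcomp Require Import all_boot all_order all_algebra.
From mathcomp Require Import complex.
From mathcomp Require Import all_classical all_reals all_analysis.
From mathcomp Require Import fingroup perm.
Require Import Defs.
Import Order.TTheory GRing.Theory Num.Theory.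
Local Open Scope ring_scope.
Local Open Scope classical_set_scope.
Set Implicit Arguments. Unset Strict Implicit.
Lemma det_struct (F : comNzRingType) (K : realDomainType) n (A : 'M[F]_n)
  (g : 'I_n -> K) :
  (forall i j, i != j -> ~~ (g i < g j) -> A i j = 0) ->
  \det A = \prod_i A i i.
Proof.
move=> HA; rewrite /determinant (bigD1 (1%g : 'S_n)) //= [X in _ + X]big1 => [|s s1].
  by rewrite odd_perm1 expr0 mul1r addr0; apply: eq_bigr => i _; rewrite perm1.
case: (boolP [exists i, A i (s i) == 0]) => [/existsP [i /eqP Hi]|H].
  by rewrite (bigD1 i) //= Hi mul0r mulr0.
exfalso.
have Hle : forall i, g i <= g (s i) /\ (s i != i -> g i < g (s i)).
  move=> i; have: A i (s i) != 0.
    by apply: contra H => Hz; apply/existsP; exists i.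
  case: (eqVneq (s i) i) => [->|ne]; first by rewrite lexx.
  move=> Hnz; case: (boolP (g i < g (s i))) => [lt|nlt]; first by rewrite ltW.
  by rewrite HA // ?eqxx // eq_sym in Hnz.
have [i Hi] : exists i, s i != i.
  case: (boolP [exists i, s i != i]) => [/existsP//|/existsPn Hs].
  exfalso; move/eqP: s1 => s1; apply: s1; apply/permP => i.
  by rewrite perm1; move: (Hs i); rewrite negbK => /eqP.
have Hsum : \sum_j g (s j) = \sum_j g j.
  by symmetry; apply: (reindex_inj (@perm_inj _ s)).
have : \sum_j g j < \sum_j g (s j).
  rewrite (bigD1 i) //= [X in _ < X](bigD1 i) //=.
  apply: ltr_leD; first by apply: (proj2 (Hle i)).
  by apply: ler_sum => j _; apply: (proj1 (Hle j)).
by rewrite Hsum ltxx.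
Qed.

Lemma eig_struct (F : fieldType) (K : realDomainType) n (A : 'M[F]_n)
  (g : 'I_n -> K) a :
  (forall i j, i != j -> ~~ (g i < g j) -> A i j = 0) ->
  eigenvalue A a = [exists i, A i i == a].
Proof.
move=> HA; rewrite /eigenvalue /eigenspace kermx_eq0 row_free_unit unitmxE unitfE.
rewrite (@det_struct _ _ _ _ g) => [|i j ij nl]; last first.
  by rewrite !mxE (negbTE ij) mulr0n subr0 HA.
rewrite negbK prodf_seq_eq0; apply/hasP/existsP => [[i _]|[i Hi]].
  by rewrite !mxE eqxx mulr1n subr_eq0 => Hi; exists i.
by exists i; rewrite ?mem_index_enum // !mxE eqxx mulr1n subr_eq0.
Qed.

Lemma eig_inv (F : fieldType) n (A : 'M[F]_n) a :
  A \in unitmx -> eigenvalue (invmx A) a = (a != 0) && eigenvalue A a^-1.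
Proof.
move=> uA; apply/eigenvalueP/andP => [[v Hv v0]|[a0 /eigenvalueP [v Hv v0]]].
  have Hv' : v = a *: (v *m A).
    by rewrite scalemxAl -Hv mulmxKV.
  have a0 : a != 0 by apply: contra v0 => /eqP a0; rewrite Hv' a0 scale0r.
  split => //; apply/eigenvalueP; exists v => //.
  by rewrite {2}Hv' scalerA mulVf // scale1r.
exists v => //.
have : v *m A *m invmx A = v by rewrite mulmxK.
rewrite Hv -scalemxAl => H.
by rewrite -{2}H scalerA divff // scale1r.
Qed.
Lemma normc_rc (R : realType) (x : R) : 0 <= x -> Normc.normc (real_complex R x) = x.
Proof. by move=> x0; rewrite /= expr0n /= addr0 sqrtr_sqr ger0_norm. Qed.

Lemma spec_rad_char (R : realType) n (T : 'M[R]_n) (h : 'I_n -> R) (i0 : 'I_n) :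
 (forall i, 0 <= h i) ->
 (forall z, eigenvalue (map_mx (real_complex R) T) z <-> exists i, z = real_complex R (h i)) ->
 (forall i, h i <= spec_rad T) /\ exists i, spec_rad T = h i.
Proof.
move=> h0 Heig.
pose im := ([arg max_(i > i0) h i])%O.
have him : forall i, h i <= h im.
  by move=> i; rewrite /im; case: arg_maxP => // j _; apply.
have HE : forall x, [set Normc.normc z | z in
         [set z : R[i] | eigenvalue (map_mx (real_complex R) T) z]] x <-> exists i, x = h i.
  move=> x; split => [[z /Heig [i ->] <-]|[i ->]].
    by exists i; rewrite normc_rc.
  by exists (real_complex R (h i)); [apply/Heig; exists i | rewrite normc_rc].
have Hsup : spec_rad T = h im.
  rewrite /spec_rad; apply: le_anti; apply/andP; split.
    apply: ge_sup; first by exists (h im); apply/HE; exists im.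
    by move=> x /HE [i ->].
  apply: ub_le_sup; last by apply/HE; exists im.
  by exists (h im) => x /HE [i ->].
by split; [move=> i; rewrite Hsup | exists im].
Qed.

Lemma struct_map (R : realType) n (T : 'M[R]_n) (g : 'I_n -> R) :
  (forall i j, i != j -> ~~ (g i < g j) -> T i j = 0) ->
  (forall i j, i != j -> ~~ (g i < g j) -> (map_mx (real_complex R) T) i j = 0).
Proof. by move=> H i j ij gij; rewrite mxE H // rmorph0. Qed.

Lemma sr_struct (R : realType) n (T : 'M[R]_n) (g : 'I_n -> R) (i0 : 'I_n) :
  (forall i j, i != j -> ~~ (g i < g j) -> T i j = 0) ->
  (forall i, 0 <= T i i) ->
  (forall i, T i i <= spec_rad T) /\ exists i, spec_rad T = T i i.
Proof.
move=> HT H0; apply: (spec_rad_char i0) => // z.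
rewrite (eig_struct _ (struct_map HT)); split.
  by move=> /existsP [i /eqP <-]; exists i; rewrite mxE.
by move=> [i ->]; apply/existsP; exists i; rewrite mxE.
Qed.

Lemma sr_inv (R : realType) n (T : 'M[R]_n) (g : 'I_n -> R) (i0 : 'I_n) :
  (forall i j, i != j -> ~~ (g i < g j) -> T i j = 0) ->
  (forall i, 0 <= T i i) -> (forall i, T i i < 1) ->
  (forall i, (1 - T i i)^-1 <= spec_rad (invmx (1%:M - T))) /\
  exists i, spec_rad (invmx (1%:M - T)) = (1 - T i i)^-1.
Proof.
move=> HT H0 H1; apply: (spec_rad_char i0) => [i|z].
  by rewrite invr_ge0 subr_ge0 ltW.
set B := map_mx (real_complex R) (1%:M - T).
have HB : forall i j, i != j -> ~~ (g i < g j) -> B i j = 0.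
  by move=> i j ij gij; rewrite !mxE (negbTE ij) HT // subr0 rmorph0.
have Bii : forall i, B i i = 1 - real_complex R (T i i).
  by move=> i; rewrite !mxE eqxx rmorphB rmorph1.
have Bnz : forall i, B i i != 0.
  move=> i; rewrite Bii -(rmorph1 (real_complex R)) -rmorphB.
  apply: contraTneq (H1 i) => /eqP; rewrite fmorph_eq0 subr_eq0 => /eqP <-.
  by rewrite ltxx.
have uB : B \in unitmx.
  rewrite unitmxE (det_struct HB) unitfE.
  by apply/prodf_neq0 => i _; apply: Bnz.
rewrite map_invmx eig_inv // (eig_struct _ HB); split.
  move=> /andP [z0 /existsP [i /eqP Hi]]; exists i.
  by rewrite fmorphV rmorphB rmorph1 -Bii Hi invrK.
move=> [i ->]; rewrite fmorphV rmorphB rmorph1 -Bii invr_eq0 Bnz /=.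
by apply/existsP; exists i; rewrite invrK.
Qed.

Lemma conv_mono (R : realType) n m (A : 'M[R]_n) (B : 'M[R]_m) :
  0 <= spec_rad B -> spec_rad B <= spec_rad A -> (conv_rate A <= conv_rate B)%E.
Proof.
move=> rq0 rqk; unfold conv_rate.
destruct (spec_rad B == 0) eqn:rq.
  by destruct (spec_rad A == 0); rewrite leey.
have rqp : 0 < spec_rad B by rewrite lt_neqAle eq_sym rq rq0.
have rkp : 0 < spec_rad A by apply: lt_le_trans rqk.
by rewrite (gt_eqF rkp) lee_fin lerN2 ler_ln ?posrE.
Qed.

Lemma hit_mono (R : realType) n m (A : 'M[R]_n) (B : 'M[R]_m) :
  (spec_rad A < 1 -> spec_rad B < 1 /\
     spec_rad (invmx (1%:M - B)) <= spec_rad (invmx (1%:M - A))) ->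
  (hit_time B <= hit_time A)%E.
Proof.
move=> H; unfold hit_time.
destruct (spec_rad A < 1) eqn:rk1; last by destruct (spec_rad B < 1); rewrite leey.
by have [-> ?] := H is_true_true; rewrite lee_fin.
Qed.

Theorem theorem2 (R : realType) (S : finType) (f : S -> R) (kappa : nat)
    (Pm : 'I_kappa -> S -> S -> R) (q : S -> 'I_kappa -> R) :
  Snon f != finset.set0 ->
  (forall k, stochastic (Pm k)) ->
  strategy_distr q ->
  ((\big[Order.min/+oo%E]_(k < kappa) conv_rate (Tsub f (pure_trans f (Pm k))))
     <= conv_rate (Tsub f (mixed_trans f q Pm)))%E /\
  (hit_time (Tsub f (mixed_trans f q Pm))
     <= \big[Order.max/-oo%E]_(k < kappa) hit_time (Tsub f (pure_trans f (Pm k))))%E.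
Proof.
move=> Hne HP [Hq01 Hq1].
case/finset.set0Pn: Hne => x0 Hx0.
pose i0 := enum_rank_in Hx0 x0.
have kpos : (0 < kappa)%N.
  rewrite lt0n; apply/negP => /eqP kz; move: (Hq1 x0); rewrite big1 => [/eqP|k _].
    by rewrite eq_sym oner_eq0.
  by case: k => m Hm; exfalso; move: Hm; rewrite kz ltn0.
pose k0 := Ordinal kpos.
pose g := fun i : 'I_#|Snon f| => f (enum_val i).
have Hpure : forall k i j, i != j -> ~~ (g i < g j) ->
    Tsub f (pure_trans f (Pm k)) i j = 0.
  move=> k i j ij gij; rewrite mxE /pure_trans (negbTE gij).
  by rewrite (inj_eq enum_val_inj) eq_sym (negbTE ij).
have Hmix : forall i j, i != j -> ~~ (g i < g j) ->
    Tsub f (mixed_trans f q Pm) i j = 0.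
  move=> i j ij gij; rewrite mxE /mixed_trans big1 // => k _.
  by move: (Hpure k i j ij gij); rewrite mxE => ->; rewrite mulr0.
pose d k x := pure_trans f (Pm k) x x.
have d0 : forall k x, 0 <= d k x.
  move=> k x; rewrite /d /pure_trans ltxx eqxx subr_ge0.
  case: (HP k) => Hp0 Hp1; rewrite -(Hp1 x) [X in _ <= X](bigID (fun z => f x < f z)) /=.
  by rewrite lerDl sumr_ge0.
have dq0 : forall x, 0 <= mixed_trans f q Pm x x.
  move=> x; apply: sumr_ge0 => k _; apply: mulr_ge0; last exact: d0.
  by case/andP: (Hq01 x k).
have Tq0 : forall i, 0 <= Tsub f (mixed_trans f q Pm) i i by move=> i; rewrite mxE.
have Tk0 : forall k i, 0 <= Tsub f (pure_trans f (Pm k)) i i.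
  by move=> k i; rewrite mxE; apply: d0.
have [Hqle [iq Hiq]] := sr_struct i0 Hmix Tq0.
pose xq := enum_val iq.
pose km := ([arg max_(k > k0) d k xq])%O.
have Hkm : forall k, d k xq <= d km xq.
  by move=> k; rewrite /km; case: arg_maxP => // j _; apply.
have Hdq : mixed_trans f q Pm xq xq <= d km xq.
  rewrite /mixed_trans -[X in _ <= X]mul1r -(Hq1 xq) mulr_suml.
  apply: ler_sum => k _; apply: ler_wpM2l; first by case/andP: (Hq01 xq k).
  exact: Hkm.
have [Hkle [ik Hik]] := sr_struct i0 (Hpure km) (Tk0 km).
set Tq := Tsub f (mixed_trans f q Pm) in Hqle Hiq *.
set Tk := Tsub f (pure_trans f (Pm km)) in Hkle Hik.
have rq0 : 0 <= spec_rad Tq by rewrite Hiq mxE.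
have rqk : spec_rad Tq <= spec_rad Tk.
  rewrite Hiq mxE; apply: (le_trans Hdq); move: (Hkle iq); rewrite mxE.
  done.
split.
  apply: (@le_trans _ _ (conv_rate Tk)).
    by rewrite (bigD1 km) //= ge_min lexx.
  exact: conv_mono.
apply: (@le_trans _ _ (hit_time Tk)); last first.
  by rewrite (bigD1 km) //= le_max lexx.
apply: hit_mono => rk1.
have rq1 : spec_rad Tq < 1 by apply: le_lt_trans rk1.
split; first exact: rq1.
have Tq1 : forall i, Tq i i < 1 by move=> i; apply: le_lt_trans (Hqle i) rq1.
have Tk1 : forall i, Tk i i < 1 by move=> i; apply: le_lt_trans (Hkle i) rk1.
have [_ [i1 Hi1]] := sr_inv i0 Hmix Tq0 Tq1.
have [Hkinv _] := sr_inv i0 (Hpure km) (Tk0 km) Tk1.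
rewrite Hi1; apply: le_trans (Hkinv iq).
have Hq0i : 0 <= Tq i1 i1 by rewrite mxE.
rewrite lef_pV2 ?posrE ?subr_gt0 //.
rewrite lerD2l lerN2; apply: (le_trans (Hqle i1)); rewrite Hiq mxE.
by apply: (le_trans Hdq); rewrite /Tk mxE.
Qed.
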